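(* Let $A$ be a finite set. Then every strongly irreducible subshift $X \subset A^{\mathbb Z}$ is a W-subshift.
   Context: A subshift of $A^{\mathbb Z}$ is a closed shift-invariant subset. $X$ is strongly irreducible if there is a finite $\Delta\subset\mathbb Z$ such that for all finite $\Omega_1,\Omega_2\subset\mathbb Z$ with $(\Omega_1-\Delta)\cap\Omega_2=\varnothing$ and all $x_1,x_2\in X$ there is $x\in X$ with $x|_{\Omega_1}=x_1|_{\Omega_1}$, $x|_{\Omega_2}=x_2|_{\Omega_2}$. $L(X)$ is the set of finite words (including the empty word) appearing as $x(i)\cdots x(j)$ in some $x\in X$; $|w|$ is word length. $X$ is a W-subshift if there is an integer $n_0\ge0$ such that for all $u,v\in L(X)$ there is $c\in L(X)$ with $|c|\le n_0$ and $ucv\in L(X)$. *)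

(* Defs.v *)
From Stdlib Require Import ZArith List FinFun.
Import ListNotations.
Open Scope Z_scope.

Definition config (A : Type) := Z -> A.

Definition cset (A : Type) := config A -> Prop.

Definition shift_invariant {A : Type} (X : cset A) : Prop :=
  forall (x : config A) (k : Z), X x -> X (fun n => x (n + k)).

(* Closedness in the prodiscrete (product of discrete) topology on A^Z:
   x lies in X as soon as every basic cylinder neighbourhood of x
   (agreement on a finite set of coordinates) meets X. *)
Definition closed_prodiscrete {A : Type} (X : cset A) : Prop :=
  forall x : config A,
    (forall F : list Z, exists y, X y /\ forall i, In i F -> y i = x i) ->
    X x.

Definition subshift {A : Type} (X : cset A) : Prop :=
  closed_prodiscrete X /\ shift_invariant X.

Definition strongly_irreducible {A : Type} (X : cset A) : Prop :=
  exists Delta : list Z,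
    forall (Om1 Om2 : list Z),
      (forall a d, In a Om1 -> In d Delta -> ~ In (a - d) Om2) ->
      forall x1 x2, X x1 -> X x2 ->
        exists x, X x /\ (forall i, In i Om1 -> x i = x1 i)
                      /\ (forall i, In i Om2 -> x i = x2 i).

Definition occurs_at {A : Type} (w : list A) (x : config A) (i : Z) : Prop :=
  forall k (d : A), (k < length w)%nat -> x (i + Z.of_nat k) = nth k w d.

(* The language L(X) (including the empty word when X is nonempty). *)
Definition language {A : Type} (X : cset A) (w : list A) : Prop :=
  exists x i, X x /\ occurs_at w x i.

Definition W_subshift {A : Type} (X : cset A) : Prop :=
  exists n0 : nat, forall u v : list A,
    language X u -> language X v ->
    exists c : list A, language X c /\ (length c <= n0)%nat /\
                       language X (u ++ c ++ v).

(* Main.v *)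
Require Import Defs.
From Stdlib Require Import ZArith List FinFun Lia.
Import ListNotations.

Definition bnd (D : list Z) : Z := fold_right (fun d m => Z.max (Z.abs d) m) 0%Z D.

Lemma bnd_spec D d : In d D -> (Z.abs d <= bnd D)%Z.
Proof. induction D; simpl; [tauto|]. intros [->|H]; [lia|]. specialize (IHD H); lia. Qed.

Lemma bnd_nn D : (0 <= bnd D)%Z.
Proof. induction D; simpl; lia. Qed.

Theorem proposition4p5 (A : Type) (HA : Finite A) (X : cset A) :
  subshift X -> strongly_irreducible X -> W_subshift X.
Proof.
  intros [_ Hsh] [Delta HD].
  exists (Z.to_nat (bnd Delta)).
  intros u v [x1 [i [X1 O1]]] [x2 [j [X2 O2]]].
  set (n0 := Z.to_nat (bnd Delta)).
  set (p := (Z.of_nat (length u) + Z.of_nat n0)%Z).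
  set (x1' := fun n => x1 (n + i)%Z).
  set (x2' := fun n => x2 (n + (j - p))%Z).
  assert (X1' : X x1') by (apply Hsh; auto).
  assert (X2' : X x2') by (apply Hsh; auto).
  set (Om1 := map Z.of_nat (seq 0 (length u))).
  set (Om2 := map (fun k => p + Z.of_nat k)%Z (seq 0 (length v))).
  destruct (HD Om1 Om2) with (x1 := x1') (x2 := x2') as [x [Xx [E1 E2]]]; auto.
  { intros a d Ha Hd Hc. unfold Om1, Om2 in *.
    apply in_map_iff in Ha as [k1 [<- Hk1]]. apply in_map_iff in Hc as [k2 [Hk2 _]].
    apply in_seq in Hk1. apply bnd_spec in Hd. pose proof (bnd_nn Delta).
    unfold p, n0 in Hk2. lia. }
  set (c := map (fun k => x (Z.of_nat (length u) + Z.of_nat k)%Z) (seq 0 n0)).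
  assert (Lc : length c = n0) by (unfold c; rewrite length_map, length_seq; auto).
  assert (Nc : forall k d, (k < n0)%nat -> nth k c d = x (Z.of_nat (length u) + Z.of_nat k)%Z).
  { intros k d Hk. unfold c. rewrite nth_indep with (d' := x (Z.of_nat (length u) + Z.of_nat 0)%Z)
      by (rewrite length_map, length_seq; auto).
    rewrite (map_nth (fun k0 => x (Z.of_nat (length u) + Z.of_nat k0)%Z)).
    rewrite seq_nth by auto. reflexivity. }
  exists c. split; [|split].
  - exists x, (Z.of_nat (length u)). split; auto. intros k d Hk. rewrite Nc; auto; lia.
  - lia.
  - exists x, 0%Z. split; auto. intros k d Hk.
    rewrite !length_app in Hk.
    destruct (Nat.lt_ge_cases k (length u)).
    + rewrite app_nth1 by auto.
      rewrite E1 by (unfold Om1; apply in_map_iff; exists k; split; [lia| apply in_seq; lia]).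
      unfold x1'. rewrite <- (O1 k d H). f_equal. lia.
    + rewrite app_nth2 by auto.
      destruct (Nat.lt_ge_cases (k - length u) (length c)).
      * rewrite app_nth1 by auto. rewrite Nc by lia. f_equal. lia.
      * rewrite app_nth2 by auto.
        rewrite E2.
        -- unfold x2'. rewrite <- (O2 (k - length u - length c)%nat d) by lia. f_equal. unfold p. lia.
        -- unfold Om2. apply in_map_iff. exists (k - length u - length c)%nat. split.
           ++ unfold p. lia.
           ++ apply in_seq. lia.
Qed.
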